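(* Let $G$ be a connected graph on $n$ vertices with $2\leq n\leq 7$. If $\psi_{n-1}(G)=2$, then $\psi_n(G)=1$.
   Context: All graphs are finite and simple. For a graph $G$ and a positive integer $k$, a $k$-path vertex cover ($k$-PVC) of $G$ is a set $S$ of vertices such that every path on $k$ vertices in $G$ contains at least one vertex of $S$ (if $G$ has no path on $k$ vertices, the empty set is a $k$-PVC). $\psi_k(G)$ denotes the minimum cardinality of a $k$-PVC of $G$. *)

(* Defs.v *)
From mathcomp Require Import all_boot.
Set Implicit Arguments. Unset Strict Implicit. Unset Printing Implicit Defensive.

Definition simple_graph (T : finType) (e : rel T) : Prop :=
  symmetric e /\ irreflexive e.

Definition is_path_seq (T : finType) (e : rel T) (p : seq T) : bool :=
  uniq p && match p with [::] => true | x :: q => path e x q end.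

Definition kpvc (T : finType) (e : rel T) (k : nat) (S : {set T}) : bool :=
  [forall p : k.-tuple T, is_path_seq e p ==> has (mem S) p].

(* psi_k(G): minimum cardinality of a k-PVC (the full vertex set is a k-PVC for k >= 1,
   so #|T| is a valid default for the minimum). *)
Definition psi (T : finType) (e : rel T) (k : nat) : nat :=
  \big[minn/#|T|]_(S : {set T} | kpvc e k S) #|S|.

Definition connected_graph (T : finType) (e : rel T) : Prop :=
  forall x y : T, connect e x y.

(* Main.v *)
Require Import Defs.
From mathcomp Require Import all_boot.
From Stdlib Require Import Classical.
From mathcomp Require Import zify.
Set Implicit Arguments. Unset Strict Implicit.

Section GA.
Variables (T : finType) (e : rel T).
Hypothesis esym : symmetric e.
Hypothesis eirr : irreflexive e.

Lemma psi_le k S : kpvc e k S -> psi e k <= #|S|.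
Proof.
move=> H; rewrite /psi.
have: S \in index_enum {set T} by rewrite mem_index_enum.
elim: (index_enum _) => [|a r IH] //; rewrite inE big_cons.
case/orP => [/eqP <-|/IH h]; first by rewrite H geq_minl.
by case: ifP => _ //; rewrite geq_min h orbT.
Qed.

Lemma psi_ge1 k : (forall S, kpvc e k S -> 0 < #|S|) -> 0 < #|T| -> 0 < psi e k.
Proof.
move=> H HT; rewrite /psi; elim/big_ind: _ => //.
  by move=> a b ha hb; rewrite leq_min ha hb.
Qed.

Lemma all_in (s : seq T) : uniq s -> #|T| <= size s -> forall x, x \in s.
Proof.
move=> us hs x; case: (boolP (x \in s)) => // xs.
have: uniq (x :: s) by rewrite /= xs.
move/card_uniqP => /= h; have := max_card (mem (x :: s)).
by rewrite h ltnNge hs.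
Qed.

Lemma all_in2 (s : seq T) y z : uniq s -> #|T| <= (size s).+1 -> y \notin s -> z != y -> z \in s.
Proof.
move=> us hs ys zy; case: (boolP (z \in s)) => // zs.
have: uniq (z :: y :: s) by rewrite /= inE negb_or zy zs ys.
move/card_uniqP => /= h; have := max_card (mem (z :: y :: s)).
by rewrite h ltnNge (leq_trans hs).
Qed.

Lemma rev_is_path s : is_path_seq e (rev s) = is_path_seq e s.
Proof.
rewrite /is_path_seq rev_uniq; case: s => [|x s] //.
rewrite lastI rev_rcons -lastI rev_path; congr (_ && _).
by apply: eq_path => a b; rewrite esym.
Qed.

Lemma adj s1 s2 u v : is_path_seq e (s1 ++ u :: v :: s2) -> e u v.
Proof.
case: s1 => [|h s1] /= /andP [_]; first by case/andP.
by rewrite cat_path => /andP [_ /=] /and3P [].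
Qed.

Lemma cyc u a' y b' : path e u (a' ++ y :: b') -> e u y -> e (last y b') (last u a') ->
  cycle e (u :: a' ++ rev (y :: b')).
Proof.
rewrite cat_path => /andP [pa /= /andP [_ pb]] euy el.
rewrite /= rcons_cat cat_path pa /= rcons_path.
have ->: last (last u a') (rev (y :: b')) = y by rewrite rev_cons last_rcons.
rewrite esym euy andbT lastI rev_rcons /= esym el /=.
rewrite rev_path; by rewrite (@eq_path _ _ e) // => a b; rewrite esym.
Qed.
End GA.
Section GB.
Variables (T : finType) (e : rel T).
Hypothesis esym : symmetric e.
Hypothesis eirr : irreflexive e.
Hypothesis econn : forall x y : T, connect e x y.
Hypothesis hn : 2 <= #|T| <= 7.

Lemma nbr x : exists y, e x y.
Proof.
have : 1 < #|T| by case/andP: hn.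
move=> h; have : 0 < #|[set~ x]| by rewrite cardsC1; case: #|T| h => [|[]].
rewrite card_gt0 => /set0Pn [z]; rewrite !inE => zx.
case/connectP: (econn x z) => [[|y p]] /=; first by move=> _ /eqP; rewrite (negbTE zx).
by case/andP => exy _ _; exists y.
Qed.

Definition ham := exists s, is_path_seq e s /\ size s = #|T|.

Lemma front u s y : is_path_seq e (u :: s) -> y \notin (u :: s) -> e y u -> is_path_seq e (y :: u :: s).
Proof. by rewrite /is_path_seq /= => /andP [-> ->] -> ->. Qed.

Hypothesis Hdel : forall x, exists q, [/\ is_path_seq e q, size q = #|T|.-1 & x \notin q].
Hypothesis nham : ~ ham.

Lemma deg3 x : 3 <= #|[set y | e x y]|.
Proof.
case: (nbr x) => y exy.
case: (Hdel y) => q [pq sq yq].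
have xy : x != y by apply/eqP => h; rewrite h eirr in exy.
have uq : uniq q by case/andP: pq.
have xq : x \in q by apply: (all_in2 uq _ yq xy); rewrite sq; case/andP: hn; case: #|T|.
case/splitPr: xq pq sq yq uq => q1 q2 pq sq yq uq.
case: (lastP q1) pq sq yq uq => [|q1' a] pq sq yq uq.
  exfalso; apply: nham; exists (y :: x :: q2); split.
    by apply: front => //; rewrite esym.
  by move: sq; rewrite /= => ->; case/andP: hn; case: #|T|.
case: q2 pq sq yq uq => [|b q2'] pq sq yq uq.
  exfalso; apply: nham; exists (y :: rev (rcons q1' a ++ [:: x])); split.
    rewrite cats1 rev_rcons; apply: front; last by rewrite esym.
      by rewrite -rev_rcons rev_is_path // -cats1.
    by rewrite -rev_rcons mem_rev -cats1.
  by move: sq; rewrite /= size_rev !size_cat !size_rcons /= addn1 => ->; case/andP: hn; case: #|T|.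
have eax : e a x by apply: (@adj _ _ q1' (b :: q2')); rewrite -cat_rcons.
have exb : e x b by apply: (@adj _ _ (rcons q1' a) q2').
have ya : a != y by apply: contraNneq yq => <-; rewrite mem_cat mem_rcons mem_head.
have yb : b != y by apply: contraNneq yq => <-; rewrite mem_cat in_cons in_cons eqxx !orbT.
have ab : a != b.
  move: uq; rewrite cat_uniq => /and3P [_ h _]; apply: contraNneq h => <-.
  by apply/hasP; exists a; rewrite ?mem_rcons ?inE eqxx ?orbT.
have u3 : uniq [:: a; b; y] by rewrite /= !inE negb_or ab ya yb.
have h3 : #|[:: a; b; y]| = 3 by move/card_uniqP: u3.
rewrite -h3; apply: subset_leq_card; apply/subsetP => z.
rewrite !inE => /or3P [] /eqP ->.
  - by rewrite esym.
  - done.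
  - done.
Qed.

Ltac mylia := repeat match goal with H : context [@card T _] |- _ => revert H end;
  let k := fresh "k" in set k := #|T|; clearbody k; intros; lia.

Lemma contra_main : False.
Proof.
have n2 : 1 < #|T| by case/andP: hn.
have n7 : #|T| <= 7 by case/andP: hn.
have [w w_in] : exists w, w \in T by apply/card_gt0P; apply: leq_trans n2.
case: (Hdel w) => p [pp sp wp].
rewrite -subn1 in sp.
have up : uniq p by case/andP: pp.
have inp y : y != w -> y \in p.
  move=> yw; apply: (all_in2 up _ wp yw); mylia.
case: p pp sp wp up inp => [|u p'] pp sp wp up inp; first by move: sp => /=; mylia.
have sp' : size p' = #|T| - 2 by move: sp => /=; mylia.
have nwu : ~~ e w u.
  apply/negP => ewu; apply: nham; exists (w :: u :: p'); split; first exact: front.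
  by rewrite /= -/(size (u :: p')) sp; mylia.
set vl := last u p'.
have nwl : ~~ e w vl.
  apply/negP => ewl; apply: nham; exists (w :: rev (u :: p')); split.
    rewrite (lastI u p') rev_rcons; apply: front => //.
      by rewrite -rev_rcons -(lastI u p') rev_is_path.
    by rewrite -rev_rcons -(lastI u p') mem_rev.
  by rewrite /= size_rev sp; mylia.
set m := size p'.
pose A := [set i : 'I_m | e u (nth w p' i)].
pose B := [set i : 'I_m | e vl (nth w (u :: p') i)].
have hA : #|[set y | e u y]| <= #|A|.
  apply: leq_trans (leq_imset_card (fun i : 'I_m => nth w p' i) A).
  apply: subset_leq_card; apply/subsetP => y; rewrite inE => euy.
  have yw : y != w by apply: contraNneq nwu => <-; rewrite esym.
  have yu : y != u by apply: contraTneq euy => ->; rewrite eirr.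
  have yp : y \in p' by move: (inp y yw); rewrite inE (negbTE yu).
  apply/imsetP; exists (Ordinal (etrans (index_mem y p') yp)); last by rewrite /= nth_index.
  by rewrite inE /= nth_index.
have hB : #|[set y | e vl y]| <= #|B|.
  apply: leq_trans (leq_imset_card (fun i : 'I_m => nth w (u :: p') i) B).
  apply: subset_leq_card; apply/subsetP => y; rewrite inE => euy.
  have yw : y != w by apply: contraNneq nwl => <-; rewrite esym.
  have yu : y != vl by apply: contraTneq euy => ->; rewrite eirr.
  have yp := inp y yw.
  have hj : index y (u :: p') < m.
    have : index y (u :: p') <= m by rewrite -ltnS; exact: (etrans (index_mem y (u :: p')) yp).
    rewrite leq_eqVlt.
    case/orP => // /eqP hj; move: yu; rewrite /vl -(nth_index w yp) hj.
    by rewrite -[m]/((size (u :: p')).-1) nth_last eqxx.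
  apply/imsetP; exists (Ordinal hj); last by rewrite /= nth_index.
  by rewrite inE /= nth_index.
have [i] : exists i, i \in A :&: B.
  apply/card_gt0P; have := cardsUI A B; have := max_card (A :|: B).
  rewrite card_ord; have := deg3 u; have := deg3 vl; mylia.
rewrite inE => /andP []; rewrite !inE => hAi hBi.
have im : i < size p' by [].
set y := nth w p' i.
set a' := take i p'.
set b' := drop i.+1 p'.
have ep' : p' = a' ++ y :: b' by rewrite /a' /y /b' -drop_nth // cat_take_drop.
have hl1 : last y b' = vl by rewrite /vl [in RHS]ep' last_cat.
have hl2 : last u a' = nth w (u :: p') i.
  by rewrite (last_nth w) size_take im -[u :: a']/(take i.+1 (u :: p')) nth_take.
have cy : cycle e (u :: a' ++ rev (y :: b')).
  apply: cyc => //; first by rewrite -ep'; case/andP: pp.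
  by rewrite hl1 hl2.
set c := u :: a' ++ rev (y :: b').
have pc : perm_eq c (u :: p') by rewrite /c perm_cons [in X in perm_eq _ X]ep' perm_cat2l perm_rev.
case: (nbr w) => z ewz.
have zw : z != w by apply: contraTneq ewz => ->; rewrite eirr.
have zc : z \in c by rewrite (perm_mem pc); apply: inp.
case: (rot_to zc) => j s' hrot.
apply: nham; exists (w :: z :: s'); split.
  have u1 : uniq (z :: s') by rewrite -hrot rot_uniq (perm_uniq pc).
  have w1 : w \notin z :: s' by rewrite -hrot mem_rot (perm_mem pc).
  have p1 : path e z s'.
    by move: cy; rewrite -(rot_cycle j) -/c hrot /= rcons_path => /andP [-> _].
  by rewrite /is_path_seq /= ewz p1 w1 andbT -[_ && uniq s']/(uniq (z :: s')) u1.
have hs : size (z :: s') = size (u :: p') by rewrite -hrot size_rot (perm_size pc).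
move: hs sp; rewrite /= => -> sp; mylia.
Qed.
End GB.

Theorem mainTheorem13 (T : finType) (e : rel T) :
  simple_graph e -> connected_graph e ->
  2 <= #|T| <= 7 ->
  psi e (#|T| - 1) = 2 ->
  psi e #|T| = 1.
Proof.
move=> [esym eirr] econn hn hpsi.
have Hdel : forall x, exists q, [/\ is_path_seq e q, size q = #|T|.-1 & x \notin q].
  move=> x; have: ~~ kpvc e (#|T| - 1) [set x].
    by apply/negP => /psi_le; rewrite hpsi cards1.
  rewrite /kpvc negb_forall => /existsP [p]; rewrite negb_imply => /andP [pp hp].
  exists p; split => //; first by rewrite size_tuple subn1.
  by apply/negP => xp; move/negP: hp; apply; apply/hasP; exists x => //; rewrite inE set11.
have hamH : ham e.
  apply: NNPP => nh; exact: (contra_main esym eirr econn hn Hdel nh).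
case: hamH => s [ps ss].
have n0 : 0 < #|T| by case/andP: hn => h _; apply: leq_trans h.
apply/eqP; rewrite eqn_leq; apply/andP; split.
  case: s ps ss => [|x0 s'] ps ss; first by move: n0; rewrite -ss.
  have : kpvc e #|T| [set x0].
    apply/forallP => p; apply/implyP => pp; apply/hasP; exists x0; last by rewrite inE set11.
    by apply: all_in; [case/andP: pp | rewrite size_tuple].
  by move/psi_le; rewrite cards1.
apply: psi_ge1 => // S /forallP /(_ (Tuple (introT eqP ss))) /implyP /(_ ps) /hasP [z _ zS].
by apply/card_gt0P; exists z.
Qed.
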